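(* Let $n\in\mathbb N$ with $n\ge 10$ and let $T_n$ be a tree on $n$ vertices with $\Delta(T_n)=n-4$. Suppose that for every integer $m\ge n$ and every connected graph $H\in\mathrm{Ex}(m;T_n)$ we have $\Delta(H)\le n-5$. Let $p=k(n-1)+r\ge n-1$ with $k\in\mathbb N$ and $r\in\{0,1,\ldots,n-2\}$. Then $$\mathrm{ex}(p;T_n)=\frac{(n-2)p-r(n-1-r)}2+\max\Big\{0,\Big\lfloor\frac{r(n-4-r)-3(n-1)}2\Big\rfloor\Big\}.$$
   Context: All graphs are finite simple graphs; $\Delta(G)$ is the maximum degree of $G$. For a graph $L$, $\mathrm{ex}(p;L)$ is the maximum number of edges in a graph on $p$ vertices containing no subgraph isomorphic to $L$, and $\mathrm{Ex}(p;L)$ is the set of graphs on $p$ vertices containing no copy of $L$ and having exactly $\mathrm{ex}(p;L)$ edges. $\lfloor x\rfloor$ is the greatest integer not exceeding $x$. *)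

(* Defs.v *)
From HB Require Import structures.
From mathcomp Require Import all_boot all_order all_algebra.
Set Implicit Arguments. Unset Strict Implicit. Unset Printing Implicit Defensive.
Import Order.TTheory GRing.Theory Num.Theory.

(* A finite simple graph on p vertices: vertex set 'I_p, edge set E a set of
   2-element subsets of 'I_p. *)
Definition graph (p : nat) := {set {set 'I_p}}.

Definition wf_graph p (E : graph p) : bool := [forall e in E, #|e| == 2].

Definition adj p (E : graph p) : rel 'I_p := fun x y => [set x; y] \in E.

Definition deg p (E : graph p) (v : 'I_p) : nat := #|[set w | adj E v w]|.

Definition maxdeg p (E : graph p) : nat := \max_(v : 'I_p) deg E v.

Definition nedges p (E : graph p) : nat := #|E|.

Definition connected p (E : graph p) : bool :=
  [forall x : 'I_p, forall y : 'I_p, connect (adj E) x y].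

Definition acyclic p (E : graph p) : Prop :=
  ~ exists s : seq 'I_p, [/\ 3 <= size s, uniq s & cycle (adj E) s].

Definition is_tree p (E : graph p) : Prop :=
  wf_graph E /\ connected E /\ acyclic E.

Definition contains p q (G : graph p) (L : graph q) : bool :=
  [exists f : {ffun 'I_q -> 'I_p},
     injectiveb f && [forall e in L, (f @: e) \in G]].

Definition ex p q (L : graph q) : nat :=
  \max_(G : graph p | wf_graph G && ~~ contains G L) nedges G.

Definition in_Ex p q (L : graph q) (G : graph p) : bool :=
  [&& wf_graph G, ~~ contains G L & nedges G == ex p L].

(* Main.v *)
Require Import Defs.
From HB Require Import structures.
From mathcomp Require Import all_boot all_order all_algebra.
From mathcomp Require Import zify.
Set Implicit Arguments. Unset Strict Implicit. Unset Printing Implicit Defensive.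
Import Order.TTheory GRing.Theory Num.Theory.


Lemma C2E x : 'C(x,2) * 2 + x = x * x.
Proof.
elim: x => [//|x IH]; rewrite binS bin1 mulnDl; lia.
Qed.

Definition Bf d r := (d + 4 + r) * d %/ 2.
Lemma BfE d r : Bf d r * 2 <= (d + 4 + r) * d <= Bf d r * 2 + 1.
Proof.
rewrite /Bf; have := divn_eq ((d + 4 + r) * d) 2; have := ltn_pmod ((d + 4 + r) * d) (isT : 0 < 2).
lia.
Qed.

Definition phi d r := maxn ('C(d+4,2) + 'C(r,2)) (Bf d r).
Lemma phi_case d r : phi d r = 'C(d+4,2) + 'C(r,2) \/ phi d r = Bf d r.
Proof. rewrite /phi /maxn; case: ifP; auto. Qed.
Lemma phi_ge1 d r x : x <= 'C(d+4,2) + 'C(r,2) -> x <= phi d r.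
Proof. by move=> h; apply: leq_trans h (leq_maxl _ _). Qed.
Lemma phi_ge2 d r x : x <= Bf d r -> x <= phi d r.
Proof. by move=> h; apply: leq_trans h (leq_maxr _ _). Qed.

Lemma L1 d r1 r2 : 5 <= d -> r1 + r2 < d + 4 ->
  phi d r1 + 'C(r2,2) <= phi d (r1 + r2).
Proof.
move=> d5 lt.
have := C2E (d+4); have := C2E r1; have := C2E r2; have := C2E (r1 + r2);
  have := BfE d r1; have := BfE d (r1 + r2).
case: (phi_case d r1) => ->.
- move=> *; apply: phi_ge1; lia.
- case: (leqP r2 (d + 1)) => h2 *.
  + apply: phi_ge2. have : r2 * r2 <= r2 * d + r2 by nia. lia.
  + apply: phi_ge1. have : (d + 4 + r1) * d <= (d+4) * (d + 4) - d - 4 by nia. lia.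
Qed.



Lemma conv d r1 r2 s : r1 + r2 = d + 4 + s -> r1 <= d + 4 -> r2 <= d + 4 ->
  'C(r1,2) + 'C(r2,2) <= 'C(d+4,2) + 'C(s,2).
Proof.
move=> e h1 h2.
have := C2E (d+4); have := C2E r1; have := C2E r2; have := C2E s.
have : r1 * r1 + r2 * r2 <= (d+4)*(d+4) + s * s by nia.
lia.
Qed.

Lemma M1 d r1 r2 : r2 <= d + 1 -> Bf d r1 + 'C(r2,2) <= Bf d (r1 + r2).
Proof.
move=> h2; have := C2E r2; have := BfE d r1; have := BfE d (r1 + r2).
have : r2 * r2 <= r2 * d + r2 by nia. lia.
Qed.

Lemma M2 d r1 r2 s : r2 < d + 4 -> r1 + r2 = d + 4 + s ->
  Bf d r1 + 'C(r2,2) <= 'C(d+4,2) + Bf d s.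
Proof.
move=> h2 e; have := C2E r2; have := C2E (d+4); have := BfE d r1; have := BfE d s.
have : (d+4+r1)*d + r2*r2 + 1 <= (d+4)*(d+4) - (d+4) + (d+4+s)*d + r2 by nia.
lia.
Qed.

Lemma M3 d r : r <= 1 -> Bf d r <= 'C(d+4,2).
Proof.
move=> h; have := C2E (d+4); have := BfE d r.
have : (d + 4 + r) * d <= (d+4) * (d + 4) - d - 4 by nia. lia.
Qed.

Lemma M4 d r1 r2 : 5 <= d -> Bf d r1 + Bf d r2 <= 'C(d+4,2) + Bf d (r1 + r2).
Proof.
move=> d5; have := C2E (d+4); have := BfE d r1; have := BfE d r2; have := BfE d (r1 + r2).
nia.
Qed.

Lemma M5 d r1 r2 s : 5 <= d -> r1 + r2 = d + 4 + s ->
  Bf d r1 + Bf d r2 <= 'C(d+4,2) + 'C(d+4,2) + Bf d s.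
Proof.
move=> d5 e; have := C2E (d+4); have := BfE d r1; have := BfE d r2; have := BfE d s.
have : (d+4+r1)*d + (d+4+r2)*d = (d+4+s)*d + 2*((d+4)*d) by nia.
have : 2*((d+4)*d) + 1 <= 2*((d+4)*(d+4) - (d+4)) by nia.
lia.
Qed.


Lemma K0 r1 r2 : 'C(r1,2) + 'C(r2,2) <= 'C(r1 + r2,2).
Proof. have := C2E r1; have := C2E r2; have := C2E (r1+r2); nia. Qed.

Lemma L2 d r1 r2 s : 5 <= d -> r1 < d + 4 -> r2 < d + 4 -> r1 + r2 = d + 4 + s ->
  phi d r1 + 'C(r2,2) <= 'C(d+4,2) + phi d s.
Proof.
move=> d5 h1 h2 e; case: (phi_case d r1) => ->.
- have := conv e (ltnW h1) (ltnW h2).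
  have : 'C(d+4,2) + 'C(s,2) <= phi d s by apply: phi_ge1.
  lia.
- have := M2 h2 e; have : Bf d s <= phi d s by apply: phi_ge2. lia.
Qed.

Lemma L3a d r1 r2 : 5 <= d -> r1 + r2 < d + 4 ->
  'C(d+4,2) + 'C(r1,2) + Bf d r2 <= 'C(d+4,2) + phi d (r1 + r2).
Proof.
move=> d5 lt; case: (leqP r1 (d+1)) => h.
- have := M1 r2 h; have : Bf d (r2 + r1) <= phi d (r1 + r2) by rewrite addnC; apply: phi_ge2.
  lia.
- have h2 : r2 <= 1 by lia.
  have := M3 d h2; have := K0 r1 r2.
  have : 'C(d+4,2) + 'C(r1 + r2,2) <= phi d (r1 + r2) by apply: phi_ge1.
  lia.
Qed.

Lemma L3 d r1 r2 : 5 <= d -> r1 + r2 < d + 4 ->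
  phi d r1 + phi d r2 <= 'C(d+4,2) + phi d (r1 + r2).
Proof.
move=> d5 lt; case: (phi_case d r1) => ->; case: (phi_case d r2) => ->.
- have := K0 r1 r2; have : 'C(d+4,2) + 'C(r1 + r2,2) <= phi d (r1 + r2) by apply: phi_ge1.
  lia.
- have := L3a d5 lt; lia.
- rewrite addnC [r1 + r2]addnC; have := @L3a d r2 r1 d5; rewrite addnC => /(_ lt); lia.
- have := M4 r1 r2 d5; have : Bf d (r1 + r2) <= phi d (r1 + r2) by apply: phi_ge2.
  lia.
Qed.

Lemma L4 d r1 r2 s : 5 <= d -> r1 < d + 4 -> r2 < d + 4 -> r1 + r2 = d + 4 + s ->
  phi d r1 + phi d r2 <= 'C(d+4,2) + 'C(d+4,2) + phi d s.
Proof.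
move=> d5 h1 h2 e; case: (phi_case d r1) => ->; case: (phi_case d r2) => ->.
- have := conv e (ltnW h1) (ltnW h2).
  have : 'C(d+4,2) + 'C(s,2) <= phi d s by apply: phi_ge1.
  lia.
- have e' : r2 + r1 = d + 4 + s by lia.
  have := M2 h1 e'; have : Bf d s <= phi d s by apply: phi_ge2. lia.
- have := M2 h2 e; have : Bf d s <= phi d s by apply: phi_ge2. lia.
- have := M5 d5 e; have : Bf d s <= phi d s by apply: phi_ge2. lia.
Qed.

Definition Fkr d k r := if k is k'.+1 then k' * 'C(d+4,2) + phi d r else 'C(r,2).

Lemma superK d k1 r1 k2 r2 : 5 <= d -> r1 < d + 4 -> r2 < d + 4 ->
  Fkr d k1 r1 + Fkr d k2 r2 <=
  (if r1 + r2 < d + 4 then Fkr d (k1 + k2) (r1 + r2)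
   else Fkr d (k1 + k2).+1 (r1 + r2 - (d + 4))).
Proof.
move=> d5 h1 h2; case: ifP => lt.
- case: k1 => [|k1]; case: k2 => [|k2]; rewrite ?addSn ?addnS ?addn0 ?add0n; cbn [Fkr].
  + exact: K0.
  + have := @L1 d r2 r1 d5 ltac:(lia); rewrite [r2 + r1]addnC; lia.
  + have := @L1 d r1 r2 d5 lt; lia.
  + have := L3 d5 lt; nia.
- have e : r1 + r2 = d + 4 + (r1 + r2 - (d + 4)) by lia.
  set s := r1 + r2 - (d + 4) in e *.
  case: k1 => [|k1]; case: k2 => [|k2]; rewrite ?addSn ?addnS ?addn0 ?add0n; cbn [Fkr].
  + have := conv e (ltnW h1) (ltnW h2).
    have : 'C(d+4,2) + 'C(s,2) <= phi d s by apply: phi_ge1.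
    lia.
  + have e' : r2 + r1 = d + 4 + s by lia.
    have := L2 d5 h2 h1 e'; nia.
  + have := L2 d5 h1 h2 e; nia.
  + have := L4 d5 h1 h2 e; nia.
Qed.

Definition F d p := Fkr d (p %/ (d + 4)) (p %% (d + 4)).

Lemma F_eq d k r : r < d + 4 -> F d (k * (d + 4) + r) = Fkr d k r.
Proof.
move=> h; have c0 : 0 < d + 4 by rewrite addn4.
by rewrite /F (divnMDl _ _ c0) modnMDl divn_small // modn_small // addn0.
Qed.

Lemma F_super d a b : 5 <= d -> F d a + F d b <= F d (a + b).
Proof.
move=> d5.
have c0 : 0 < d + 4 by rewrite addn4.
rewrite {1}(divn_eq a (d+4)) {1}(divn_eq b (d+4)) {3}(divn_eq a (d+4)) {3}(divn_eq b (d+4)).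
have h1 := ltn_pmod a c0; have h2 := ltn_pmod b c0.
rewrite !F_eq //.
set k1 := a %/ (d+4); set k2 := b %/ (d+4); set r1 := a %% (d+4); set r2 := b %% (d+4).
have := superK k1 k2 d5 h1 h2; case: ifP => lt.
- have -> : k1 * (d + 4) + r1 + (k2 * (d + 4) + r2) = (k1 + k2) * (d+4) + (r1 + r2) by nia.
  by rewrite F_eq.
- have -> : k1 * (d + 4) + r1 + (k2 * (d + 4) + r2) = (k1 + k2).+1 * (d+4) + (r1 + r2 - (d+4)) by nia.
  rewrite F_eq //; lia.
Qed.

Lemma F_conn d q e : 5 <= d -> d + 4 <= q -> e * 2 <= q * d -> e <= F d q.
Proof.
move=> d5 hq he.
have c0 : 0 < d + 4 by rewrite addn4.
move: hq he; rewrite (divn_eq q (d+4)) F_eq ?ltn_pmod //.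
set k := q %/ (d+4); set r := q %% (d+4).
have hr : r < d + 4 by apply: ltn_pmod.
case: k => [|k] /= => hq he.
- lia.
- have := C2E (d+4); have := BfE d r.
  have : Bf d r <= phi d r by apply: phi_ge2.
  have : k.+1 * (d + 4) + r = k * (d+4) + (d + 4 + r) by nia.
  have : (k * (d+4)) * d <= (k * (d+4)) * (d + 3) by nia.
  nia.
Qed.

Lemma F_small d q : q <= d + 4 -> 'C(q,2) <= F d q.
Proof.
move=> h; case: (ltnP q (d+4)) => h'.
- by rewrite -[q]add0n -[0]/(0 * (d+4)) F_eq.
- have -> : q = 1 * (d + 4) + 0 by lia.
  have c0 : 0 < d + 4 by rewrite addn4.
  rewrite (@F_eq d 1 0 c0); cbn [Fkr]; rewrite mul1n addn0; apply: leq_trans (leq_addl _ _); apply: phi_ge1; lia.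
Qed.


Lemma containsP p q (G : graph p) (L : graph q) :
  contains G L -> exists f : 'I_q -> 'I_p, injective f /\ forall e, e \in L -> f @: e \in G.
Proof.
case/existsP => f /andP [/injectiveP finj /forallP fE].
exists f; split => // e eL; exact: (implyP (fE e) eL).
Qed.

Lemma contains_deg p q (G : graph p) (L : graph q) : contains G L -> maxdeg L <= maxdeg G.
Proof.
move=> /containsP [f [finj fE]].
rewrite /maxdeg; apply/bigmax_leqP => v _.
apply: leq_trans (leq_bigmax (f v)).
rewrite /deg -(card_imset _ finj).
apply: subset_leq_card; apply/subsetP => x /imsetP [w]; rewrite inE => hw ->.
rewrite inE /adj; have := fE _ hw; by rewrite imsetU1 imset_set1.
Qed.

Lemma contains_card p q (G : graph p) (L : graph q) : contains G L -> q <= p.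
Proof.
move=> /containsP [f [finj _]]; have := leq_card f finj; by rewrite !card_ord.
Qed.

Lemma wfP p (G : graph p) : wf_graph G -> forall e, e \in G -> #|e| = 2.
Proof. by move=> /forallP wf e h; move/implyP: (wf e) => /(_ h) /eqP. Qed.

Lemma handshake p (G : graph p) : wf_graph G -> \sum_v deg G v = nedges G * 2.
Proof.
move=> /wfP wf'.
have degE v : deg G v = #|[set e in G | v \in e]|.
  rewrite /deg.
  have -> : [set e in G | v \in e] = (fun w => [set v; w]) @: [set w | adj G v w].
    apply/setP => e; apply/idP/idP.
    - rewrite inE => /andP[eG ve]; move: (wf' _ eG) => /eqP/cards2P [x [y [xy exy]]].
      move: ve; rewrite exy !inE => /orP[]/eqP->; apply/imsetP.
      + exists y => //; rewrite inE /adj; by move: eG; rewrite exy.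
      + exists x; last by rewrite setUC.
        rewrite inE /adj setUC; by move: eG; rewrite exy.
    - case/imsetP => w; rewrite inE /adj => hw ->; by rewrite inE hw set21.
  rewrite card_in_imset // => w1 w2; rewrite !inE /adj => h1 h2 e.
  have : w1 \in [set v; w2] by rewrite -e set22.
  rewrite !inE => /orP[/eqP w1v|/eqP //].
  have := wf' _ h1; by rewrite w1v cards2 eqxx.
transitivity (\sum_(v : 'I_p) \sum_(e in G) ((v \in e) : nat)).
  apply: eq_bigr => v _; rewrite degE -sum1_card big_mkcond /= [RHS]big_mkcond /=.
  apply: eq_bigr => e _; rewrite inE; by case: (e \in G); case: (v \in e).
rewrite exchange_big /=; transitivity (\sum_(e in G) 2).
  apply: eq_bigr => e eG; rewrite -(wf' _ eG) -sum1_card [RHS]big_mkcond /=.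
  apply: eq_bigr => v _; by case: (v \in e).
by rewrite sum_nat_const.
Qed.

Lemma nedges_maxdeg p (G : graph p) : wf_graph G -> nedges G * 2 <= p * maxdeg G.
Proof.
move=> wf; rewrite -handshake //.
have -> : p * maxdeg G = \sum_(v : 'I_p) maxdeg G by rewrite sum_nat_const card_ord.
apply: leq_sum => v _; exact: leq_bigmax.
Qed.

Lemma nedges_le p (G : graph p) : wf_graph G -> nedges G <= 'C(p, 2).
Proof.
move=> /wfP wf; rewrite /nedges.
apply: (@leq_trans #|[set e : {set 'I_p} | #|e| == 2]|); last by rewrite card_draws card_ord.
by apply: subset_leq_card; apply/subsetP => e eG; rewrite inE wf.
Qed.

Definition Kg p : graph p := [set e : {set 'I_p} | #|e| == 2].
Lemma Kg_wf p : wf_graph (Kg p).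
Proof. by apply/forallP => e; apply/implyP; rewrite inE. Qed.
Lemma Kg_edges p : nedges (Kg p) = 'C(p, 2).
Proof. by rewrite /nedges card_draws card_ord. Qed.

Lemma ex_ub p q (L : graph q) (G : graph p) :
  wf_graph G -> ~~ contains G L -> nedges G <= ex p L.
Proof.
move=> wf nc; rewrite /ex.
apply: (leq_bigmax_cond (P := fun G : graph p => wf_graph G && ~~ contains G L)).
by rewrite wf nc.
Qed.

Lemma maxdeg0 p : maxdeg (set0 : graph p) = 0.
Proof.
rewrite /maxdeg big1 // => v _; rewrite /deg; apply/eqP; rewrite cards_eq0; apply/eqP/setP => w.
by rewrite !inE /adj in_set0.
Qed.

Lemma ex_attain p q (L : graph q) : 0 < maxdeg L ->
  exists G : graph p, [/\ wf_graph G, ~~ contains G L & nedges G = ex p L].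
Proof.
move=> hL.
have := @eq_bigmax_cond _ [pred G : graph p | wf_graph G && ~~ contains G L] (@nedges p).
case.
- apply/card_gt0P; exists set0; rewrite inE; apply/andP; split.
  + by apply/forallP => e; rewrite in_set0.
  + apply/negP => /contains_deg; rewrite maxdeg0 leqn0 => /eqP h0; by rewrite h0 in hL.
- move=> G; rewrite inE => /andP[wf nc] e; exists G; split => //.
Qed.


Definition res p (G : graph p) (S : {set 'I_p}) : graph #|S| :=
  [set e : {set 'I_#|S|} | ((fun i : 'I_#|S| => enum_val i) @: e) \in G].

Lemma res_wf p (G : graph p) S : wf_graph G -> wf_graph (res G S).
Proof.
move=> /wfP wf; apply/forallP => e; apply/implyP; rewrite inE => /wf.
by rewrite card_imset //; [move->| exact: enum_val_inj].
Qed.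

Lemma res_free p q (G : graph p) (L : graph q) S :
  ~~ contains G L -> ~~ contains (res G S) L.
Proof.
move=> nc; apply/negP => /containsP [f [finj fE]]; apply: (negP nc).
apply/existsP; exists [ffun v => enum_val (f v)]; apply/andP; split.
- apply/injectiveP => x y; rewrite !ffunE => /enum_val_inj; exact: finj.
- apply/forallP => e; apply/implyP => eL; have := fE e eL; rewrite inE => h.
  suff -> : [ffun v => enum_val (f v)] @: e = (fun i : 'I_#|S| => enum_val i) @: (f @: e) by [].
  rewrite -imset_comp; apply: eq_imset => v; by rewrite ffunE.
Qed.

Lemma res_edges p (G : graph p) S : nedges (res G S) = #|[set e in G | e \subset S]|.
Proof.
suff E1 : (fun e : {set 'I_#|S|} => (fun i : 'I_#|S| => enum_val i) @: e) @: res G S = [set e in G | e \subset S].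
  by rewrite /nedges -E1 card_imset //; apply: imset_inj; exact: enum_val_inj.
apply/setP => e; apply/imsetP/idP.
- case => e'; rewrite inE => he' ->; rewrite inE he' /=.
  apply/subsetP => x /imsetP [i _ ->]; exact: enum_valP.
- rewrite inE => /andP [eG eS].
  have E : e = (fun i : 'I_#|S| => enum_val i) @: [set i | enum_val i \in e].
    apply/setP => x; apply/idP/imsetP.
    + move=> xe; have xS : x \in S := subsetP eS x xe.
      by exists (enum_rank_in xS x); rewrite ?inE enum_rankK_in.
    + by case => i; rewrite inE => h ->.
  exists [set i | enum_val i \in e] => //; by rewrite inE -E.
Qed.

Lemma split_graph p (G : graph p) : wf_graph G -> ~~ connected G ->
  exists S : {set 'I_p}, [/\ 0 < #|S|, 0 < #|~: S| &
     nedges G = nedges (res G S) + nedges (res G (~: S))].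
Proof.
move=> wf; rewrite /connected => /forallPn [x /forallPn [y nxy]].
set S := [set z | connect (adj G) x z].
exists S.
have cl u w : [set u; w] \in G -> (u \in S) = (w \in S).
  move=> h; have h' : [set w; u] \in G by rewrite setUC.
  rewrite !inE; apply/idP/idP => c.
  + exact: connect_trans c (connect1 h).
  + exact: connect_trans c (connect1 h').
have side e : e \in G -> (e \subset S) || (e \subset ~: S).
  move=> eG; move: (wfP wf eG) => /eqP/cards2P [u [w [_ E]]]; rewrite E in eG *.
  case uS: (u \in S).
  - have wS : w \in S by rewrite -(cl u w eG).
    by apply/orP; left; apply/subsetP => z; rewrite in_set2 => /orP[]/eqP->.
  - have wS : (w \in S) = false by rewrite -(cl u w eG).
    by apply/orP; right; apply/subsetP => z; rewrite in_set2 => /orP[]/eqP->; rewrite in_setC ?uS ?wS.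
split.
- by apply/card_gt0P; exists x; rewrite inE connect0.
- by apply/card_gt0P; exists y; rewrite !inE.
- rewrite !res_edges /nedges.
  set A1 := [set e in G | e \subset S]; set A2 := [set e in G | e \subset ~: S].
  have U : G = A1 :|: A2.
    apply/setP => e; rewrite !inE; case eG: (e \in G) => //=; by rewrite (side _ eG).
  have I : A1 :&: A2 = set0.
    apply/setP => e; rewrite !inE; apply/negP => /andP[/andP[eG s1] /andP[_ s2]].
    have : e \subset S :&: ~: S by rewrite subsetI s1 s2.
    rewrite setICr subset0 => /eqP e0; have := wfP wf eG; by rewrite e0 cards0.
  by rewrite -cardsUI -U I cards0 addn0.
Qed.

Definition gunion a b (A : graph a) (B : graph b) : graph (a + b) :=
  [set (@lshift a b) @: e | e : {set 'I_a} in A] :|: [set (@rshift a b) @: e | e : {set 'I_b} in B].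

Lemma lr_disj a b (X : {set 'I_a}) (Y : {set 'I_b}) :
  (@lshift a b) @: X = (@rshift a b) @: Y -> X = set0.
Proof.
move=> E; apply/setP => i; rewrite in_set0; apply/negP => iX.
have : @lshift a b i \in (@rshift a b) @: Y by rewrite -E imset_f.
case/imsetP => j _ /(congr1 val) /=; have := ltn_ord i; lia.
Qed.

Lemma gunion_wf a b (A : graph a) (B : graph b) :
  wf_graph A -> wf_graph B -> wf_graph (gunion A B).
Proof.
move=> /wfP wA /wfP wB; apply/forallP => e; apply/implyP; rewrite inE.
case/orP => /imsetP [e' he' ->]; rewrite card_imset ?wA ?wB //;
  [exact: lshift_inj | exact: rshift_inj].
Qed.

Lemma gunion_edges a b (A : graph a) (B : graph b) :
  wf_graph A -> nedges (gunion A B) = nedges A + nedges B.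
Proof.
move=> /wfP wA; rewrite /nedges /gunion.
have I : [set (@lshift a b) @: e | e : {set 'I_a} in A] :&: [set (@rshift a b) @: e | e : {set 'I_b} in B] = set0.
  apply/setP => e; rewrite !inE; apply/negP => /andP[/imsetP [e1 h1 ->] /imsetP [e2 h2 E]].
  have := wA _ h1; by rewrite (lr_disj E) cards0.
move: (cardsUI [set (@lshift a b) @: e | e : {set 'I_a} in A] [set (@rshift a b) @: e | e : {set 'I_b} in B]).
rewrite I cards0 addn0 => ->.
by rewrite !card_imset //; apply: imset_inj; first [exact: lshift_inj | exact: rshift_inj].
Qed.

Lemma union_free a b q (A : graph a) (B : graph b) (L : graph q) :
  wf_graph L -> connected L -> 0 < q -> ~~ contains A L -> ~~ contains B L ->
  ~~ contains (gunion A B) L.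
Proof.
move=> wL cL q0 nA nB; apply/negP => /containsP [f [finj fE]].
have sideU e : e \in gunion A B -> forall u w, u \in e -> w \in e -> (u < a) = (w < a).
  rewrite inE => /orP [] /imsetP [e' _ ->] u w /imsetP [i _ ->] /imsetP [j _ ->] /=.
  - by rewrite !ltn_ord.
  - by rewrite !ltnNge !leq_addr.
have cl : closed (adj L) [pred v | f v < a].
  move=> u w h; rewrite !inE; have := fE _ h; rewrite imsetU1 imset_set1 => h'.
  by apply: (sideU _ h'); rewrite !inE eqxx ?orbT.
pose v0 : 'I_q := Ordinal q0.
have all v : (f v < a) = (f v0 < a).
  have c := forallP ((forallP cL) v0) v.
  by have := closed_connect cl c; rewrite !inE => ->.
have ne e : e \in L -> f @: e != set0.
  move=> eL; rewrite imset_eq0; apply/eqP => e0; have := wfP wL eL; by rewrite e0 cards0.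
case h0 : (f v0 < a).
- apply: (negP nA); apply/existsP.
  pose g := [ffun v => insubd (Ordinal h0) (val (f v)) : 'I_a].
  have gE v : @lshift a b (g v) = f v.
    by apply: val_inj; rewrite /= ffunE val_insubd all h0.
  exists g; apply/andP; split.
  + apply/injectiveP => x y hxy; apply: finj; by rewrite -!gE hxy.
  + apply/forallP => e; apply/implyP => eL.
    have fe : f @: e = (@lshift a b) @: (g @: e).
      by rewrite -imset_comp; apply: eq_imset => v; rewrite /= gE.
    have := fE _ eL; rewrite inE => /orP [] /imsetP [e' he' E].
    * by move: E; rewrite fe => /(imset_inj (@lshift_inj a b)) ->.
    * exfalso; move: (E); rewrite fe => /lr_disj g0.
      by move: (ne _ eL); rewrite fe g0 imset0 eqxx.
- have hb : f v0 - a < b by have := ltn_ord (f v0); lia.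
  apply: (negP nB); apply/existsP.
  pose g := [ffun v => insubd (Ordinal hb) (val (f v) - a) : 'I_b].
  have gE v : @rshift a b (g v) = f v.
    apply: val_inj; rewrite /= ffunE val_insubd.
    have := all v; rewrite h0 => /negbT; rewrite -leqNgt => h; have := ltn_ord (f v).
    case: ifP => /= h'; lia.
  exists g; apply/andP; split.
  + apply/injectiveP => x y hxy; apply: finj; by rewrite -!gE hxy.
  + apply/forallP => e; apply/implyP => eL.
    have fe : f @: e = (@rshift a b) @: (g @: e).
      by rewrite -imset_comp; apply: eq_imset => v; rewrite /= gE.
    have := fE _ eL; rewrite inE => /orP [] /imsetP [e' he' E].
    * exfalso; move: (E); rewrite fe => E'; have g0 := lr_disj (esym E').
      by move: (ne _ eL); rewrite E g0 imset0 eqxx.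
    * by move: E; rewrite fe => /(imset_inj (@rshift_inj a b)) ->.
Qed.


Lemma sum_int a b lo hi :
  \sum_(a <= j < b) ((lo <= j) && (j < hi) : nat) = minn b hi - maxn a lo.
Proof.
elim: b => [|b IH]; first by rewrite big_geq //; lia.
case: (leqP a b) => h.
- rewrite big_nat_recr //= IH; lia.
- rewrite big_geq //; lia.
Qed.

Lemma sum_int0 b hi : \sum_(0 <= j < b) ((j < hi) : nat) = minn b hi.
Proof. have := sum_int 0 b 0 hi; rewrite /= => ->; lia. Qed.

Lemma sum_eqc a b t (c : bool) :
  \sum_(a <= j < b) (((j == t) && c) : nat) = (c && (a <= t < b)).
Proof.
case: c.
- transitivity (\sum_(a <= j < b) ((t <= j) && (j < t.+1) : nat)); last by rewrite sum_int; lia.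
  apply: eq_big_nat => j _; lia.
- rewrite big1 // => j _; by rewrite andbF.
Qed.

Definition ctd N i j := if i <= j then j - i else j + N - i.
Definition R1 N h i j := (i != j) && (minn (ctd N i j) (ctd N j i) <= h).
Definition R2 N (o : bool) i j := [&& o, (i - j) + (j - i) == N./2 & minn i j < N./2].
Definition Rn N h o i j := R1 N h i j || R2 N o i j.

Lemma R1_pt N h i j : 2 * h + 2 <= N -> i < N -> j < N ->
  (R1 N h i j : nat) = ((i.+1 <= j) && (j < i + h + 1) : nat) + ((i - h <= j) && (j < i) : nat)
    + ((N + i - h <= j) && (j < N) : nat) + ((0 <= j) && (j < i + h + 1 - N) : nat).
Proof.
move=> hN iN jN; rewrite /R1 /ctd.
case: (leqP i j) => hij; case: (leqP j i) => hji; lia.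
Qed.

Lemma S1 N h i : 2 * h + 2 <= N -> i < N -> \sum_(0 <= j < N) (R1 N h i j : nat) = 2 * h.
Proof.
move=> hN iN.
transitivity (\sum_(0 <= j < N) (((i.+1 <= j) && (j < i + h + 1) : nat) + ((i - h <= j) && (j < i) : nat)
    + ((N + i - h <= j) && (j < N) : nat) + ((0 <= j) && (j < i + h + 1 - N) : nat))).
  apply: eq_big_nat => j /andP [_ jN]; exact: R1_pt.
rewrite !big_split /= !sum_int sum_int0; lia.
Qed.

Lemma S2 N o i : 2 <= N -> i < N ->
  \sum_(0 <= j < N) (R2 N o i j : nat) = (o && (i < 2 * N./2)).
Proof.
move=> hN iN; have m1 : 1 <= N./2 by lia. have m2 : 2 * N./2 <= N by lia.
transitivity (\sum_(0 <= j < N) ((((j == i + N./2) && (o && (i < N./2))) : nat)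
   + (((j == i - N./2) && [&& o, N./2 <= i & i - N./2 < N./2]) : nat))).
  apply: eq_big_nat => j /andP [_ jN]; rewrite /R2; case: o => /=; lia.
rewrite big_split /= !sum_eqc; case: o => /=; lia.
Qed.

Lemma Rn_pt N h o i j : 2 * h + 2 <= N -> (Rn N h o i j : nat) = R1 N h i j + R2 N o i j.
Proof.
move=> hN; rewrite /Rn /R1 /R2 /ctd; case: o => /=; last by rewrite orbF addn0.
case: (leqP i j) => hij; case: (leqP j i) => hji; lia.
Qed.

Lemma deg_sum N h o i : 2 * h + 2 <= N -> i < N ->
  \sum_(0 <= j < N) (Rn N h o i j : nat) = 2 * h + (o && (i < 2 * N./2)).
Proof.
move=> hN iN; transitivity (\sum_(0 <= j < N) ((R1 N h i j : nat) + R2 N o i j)).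
  by apply: eq_big_nat => j _; apply: Rn_pt.
rewrite big_split /= S1 // S2 //; lia.
Qed.

Lemma Rn_sym N h o i j : Rn N h o i j = Rn N h o j i.
Proof. by rewrite /Rn /R1 /R2 eq_sym minnC [minn i j]minnC addnC. Qed.

Lemma Rn_irr N h o i : 2 <= N -> Rn N h o i i = false.
Proof. move=> hN; rewrite /Rn /R1 /R2 eqxx /=; case: o => //=; lia. Qed.

Definition Circ N h o : graph N :=
  [set e : {set 'I_N} | [exists i : 'I_N, exists j : 'I_N, Rn N h o i j && (e == [set i; j])]].

Lemma Circ_adj N h o (i j : 'I_N) : 2 <= N -> adj (Circ N h o) i j = Rn N h o i j.
Proof.
move=> hN; rewrite /adj inE; apply/idP/idP.
- case/existsP => i' /existsP [j' /andP [R /eqP E]].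
  have := set21 i j; have := set22 i j; have := set21 i' j'; have := set22 i' j'.
  rewrite -!E E !inE => /orP[]/eqP e1 /orP[]/eqP e2 /orP[]/eqP e3 /orP[]/eqP e4;
    subst; move: R; rewrite ?Rn_irr //; try by []; try by rewrite Rn_sym.
  all: try (move: (set22 i' j'); rewrite -E !inE orbb => /eqP ->; by rewrite Rn_irr).
  all: try (move: (set21 i' j'); rewrite -E !inE orbb => /eqP ->; by rewrite Rn_irr).
- by move=> R; apply/existsP; exists i; apply/existsP; exists j; rewrite R eqxx.
Qed.

Lemma Circ_wf N h o : 2 <= N -> wf_graph (Circ N h o).
Proof.
move=> hN; apply/forallP => e; apply/implyP; rewrite inE => /existsP [i /existsP [j /andP [R /eqP ->]]].
have ij : i != j by apply: contraTneq R => ->; rewrite Rn_irr.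
by rewrite cards2 ij.
Qed.

Lemma Circ_deg N h o (i : 'I_N) : 2 * h + 2 <= N ->
  deg (Circ N h o) i = 2 * h + (o && (i < 2 * N./2)).
Proof.
move=> hN; rewrite /deg.
transitivity (\sum_(j < N) (Rn N h o i j : nat)).
  rewrite -sum1_card big_mkcond /=; apply: eq_bigr => j _; rewrite inE Circ_adj; last by lia.
  by case: Rn.
by rewrite -(big_mkord xpredT (fun j => (Rn N h o i j : nat))) deg_sum.
Qed.

Lemma Circ_maxdeg N h o : 2 * h + 2 <= N -> maxdeg (Circ N h o) <= 2 * h + o.
Proof.
move=> hN; apply/bigmax_leqP => i _; rewrite Circ_deg //; case: o => /=; lia.
Qed.

Lemma Circ_edges N h o : 2 * h + 2 <= N ->
  nedges (Circ N h o) * 2 = 2 * h * N + o * (2 * N./2).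
Proof.
move=> hN; rewrite -handshake; last by apply: Circ_wf; lia.
rewrite (eq_bigr (fun i : 'I_N => 2 * h + (o && (i < 2 * N./2)))); last by move=> i _; rewrite Circ_deg.
rewrite big_split /= sum_nat_const card_ord.
rewrite -(big_mkord xpredT (fun i => (o && (i < 2 * N./2) : nat))).
case: o => /=.
- by rewrite sum_int0; lia.
- rewrite big1 //; lia.
Qed.


Lemma ex_super a b q (L : graph q) : wf_graph L -> connected L -> 0 < q -> 0 < maxdeg L ->
  ex a L + ex b L <= ex (a + b) L.
Proof.
move=> wL cL q0 m0.
have [A [wA nA eA]] := @ex_attain a q L m0.
have [B [wB nB eB]] := @ex_attain b q L m0.
rewrite -eA -eB -gunion_edges //; apply: ex_ub; first exact: gunion_wf.
exact: union_free.
Qed.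

Lemma ex_clique q (L : graph q) c : c < q -> 'C(c, 2) <= ex c L.
Proof.
move=> h; rewrite -Kg_edges; apply: ex_ub; first exact: Kg_wf.
apply/negP => /contains_card; lia.
Qed.

Lemma ex_circ q (L : graph q) d r : 5 <= d -> maxdeg L = d + 1 -> Bf d r <= ex (d + 4 + r) L.
Proof.
move=> d5 mL.
set N := d + 4 + r; set h := d./2; set o := odd d.
have hN : 2 * h + 2 <= N by rewrite /N /h; lia.
apply: (@leq_trans (nedges (Circ N h o))).
- have := Circ_edges o hN; have := BfE d r; have := odd_double_half d; have := odd_double_half N.
  rewrite -/N -/h -/o.
  have : N * d = N * o + 2 * h * N.
    rewrite -(odd_double_half d) -/h -/o mulnDr; lia.
  have : N * o <= (odd N) + 2 * (N./2) * o.
    rewrite -{1}(odd_double_half N); case: (o); case: (odd N); lia.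
  nia.
- apply: ex_ub; first by apply: Circ_wf; lia.
  apply/negP => /contains_deg; have := Circ_maxdeg o hN; rewrite mL.
  have : 2 * h + o = d by rewrite /h /o -(odd_double_half d) ; lia.
  lia.
Qed.

Lemma ub (n : nat) (T : graph n) d : n = d + 5 -> 5 <= d -> maxdeg T = d + 1 ->
  (forall (m : nat) (H : graph m), n <= m -> in_Ex T H -> connected H -> maxdeg H <= n - 5) ->
  forall q, ex q T <= F d q.
Proof.
move=> hn d5 mT hyp q; elim/ltn_ind: q => q IH.
have [G [wG nG eG]] := @ex_attain q n T ltac:(by rewrite mT addn1).
rewrite -eG.
case: (leqP q (d + 4)) => hq.
- exact: leq_trans (nedges_le wG) (F_small hq).
- case cG: (connected G).
  + have hm := hyp q G ltac:(lia) ltac:(by rewrite /in_Ex wG nG eG eqxx) cG.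
    apply: F_conn => //; first lia.
    apply: leq_trans (nedges_maxdeg wG) _; rewrite leq_mul2l; apply/orP; right; lia.
  + have [S [s1 s2 ->]] := split_graph wG (negbT cG).
    have hS : #|S| + #|~: S| = q by rewrite cardsC card_ord.
    apply: (leq_trans (leq_add (ex_ub (res_wf S wG) (res_free S nG)) (ex_ub (res_wf (~:S) wG) (res_free (~:S) nG)))).
    apply: leq_trans (leq_add (IH _ _) (IH _ _)) _; [lia | lia | ].
    apply: leq_trans (F_super _ _ d5) _; by rewrite hS.
Qed.

Lemma lb (n : nat) (T : graph n) d r : n = d + 5 -> 5 <= d -> maxdeg T = d + 1 ->
  wf_graph T -> connected T -> r < d + 4 ->
  forall k, k * 'C(d+4,2) + phi d r <= ex (k.+1 * (d + 4) + r) T.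
Proof.
move=> hn d5 mT wT cT hr.
have m0 : 0 < maxdeg T by rewrite mT addn1.
have n0 : 0 < n by lia.
have base : phi d r <= ex (d + 4 + r) T.
  rewrite /phi geq_max; apply/andP; split.
  - apply: leq_trans (ex_super (d+4) r wT cT n0 m0).
    apply: leq_add; apply: ex_clique; lia.
  - exact: ex_circ.
elim => [|k IHk].
- by rewrite mul0n add0n mul1n.
- have e : k.+2 * (d + 4) + r = (d + 4) + (k.+1 * (d + 4) + r) by rewrite mulSn addnA.
  rewrite e; apply: leq_trans (ex_super _ _ wT cT n0 m0).
  rewrite mulSn -addnA; apply: leq_add => //; apply: ex_clique; lia.
Qed.


Local Open Scope ring_scope.

Lemma final_arith (n d k r p e : nat) : (r < d + 4)%N -> n = (d + 5)%N ->
  p = (k.+1 * (d + 4) + r)%N ->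
  e = (k * 'C(d+4,2) + maxn ('C(d+4,2) + 'C(r,2)) (Bf d r))%N ->
  e%:Z = ((((n%:Z - 2) * p%:Z - r%:Z * (n%:Z - 1 - r%:Z)) %/ 2)%Z
     + Num.max 0 (((r%:Z * (n%:Z - 4 - r%:Z) - 3 * (n%:Z - 1)) %/ 2)%Z))%R.
Proof.
move=> hr -> -> ->.
have Cc := C2E (d+4); have Cr := C2E r.
have hB : Bf d r = ((d + 4 + r) * d %/ 2)%N by [].
set Z := ('C(d+4,2) + 'C(r,2))%N.
have e1 : ((((d + 5)%:Z - 2) * (k.+1 * (d + 4) + r)%N%:Z - r%:Z * ((d + 5)%:Z - 1 - r%:Z)))%R
           = ((k.+1 * 'C(d+4,2) + 'C(r,2))%N%:Z * 2)%R.
  apply/eqP; rewrite -subr_eq0; apply/eqP. lia.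
rewrite e1 mulzK //.
have e2 : (r%:Z * ((d + 5)%:Z - 4 - r%:Z) - 3 * ((d + 5)%:Z - 1))
   = (- Z%:Z) * 2 + ((d + 4 + r) * d)%N%:Z.
  apply/eqP; rewrite -subr_eq0; apply/eqP. rewrite /Z; lia.
rewrite e2 divzMDl // divz_nat -hB /Z.
lia.
Qed.


Theorem lemma2p10 (n : nat) (T : graph n) (p k r : nat) :
  (10 <= n)%N ->
  is_tree T ->
  maxdeg T = (n - 4)%N ->
  (forall (m : nat) (H : graph m),
      (n <= m)%N -> in_Ex T H -> connected H -> (maxdeg H <= n - 5)%N) ->
  p = (k * (n - 1) + r)%N ->
  (r <= n - 2)%N ->
  (n - 1 <= p)%N ->
  (ex p T)%:Z =
    ((((n%:Z - 2) * p%:Z - r%:Z * (n%:Z - 1 - r%:Z)) %/ 2)%Z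
     + Num.max 0 (((r%:Z * (n%:Z - 4 - r%:Z) - 3 * (n%:Z - 1)) %/ 2)%Z)).
Proof.
move=> n10 [wT [cT _]] mT hyp hp hr hp1.
pose d := (n - 5)%N.
have hn : n = (d + 5)%N by rewrite /d; lia.
have d5 : (5 <= d)%N by rewrite /d; lia.
have mT' : maxdeg T = (d + 1)%N by rewrite mT /d; lia.
have hc : (n - 1 = d + 4)%N by rewrite /d; lia.
rewrite hc in hp.
have hr' : (r < d + 4)%N by rewrite /d; lia.
case: k hp => [|k] hp; first by exfalso; rewrite /d in hp hr' hc; lia.
have e : ex p T = (k * 'C(d+4,2) + phi d r)%N.
  apply/eqP; rewrite eqn_leq; apply/andP; split.
  - by have := ub hn d5 mT' hyp p; rewrite hp F_eq.
  - rewrite hp; exact: lb hn d5 mT' wT cT hr' k.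
exact: (final_arith hr' hn hp e).
Qed.
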